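(* Let $H:\mathbb{R}^{2m}\to\mathbb{R}$ be smooth and let $\bar y\in\mathbb{R}^{2m}$ be such that $F'=SH_{yy}(\bar y)$ is invertible. Consider the scheme $$y_{n+1}-y_n=\theta_n\,S\,\bar\nabla_sH(y_n,y_{n+1}),\qquad \theta_n=2(F')^{-1}\tanh\frac{h_nF'}{2}.$$ This scheme preserves the energy exactly: $H(y_{n+1})=H(y_n)$.
   Context: Notation: - $y=(x,p)\in\mathbb{R}^{2m}$, $y_n=(x_n,p_n)$, and $h_n$ is the time step. - $S=\begin{pmatrix}0&1\\-1&0\end{pmatrix}$ with $m\times m$ blocks. - $H_{yy}$ is the Hessian of $H$, so $F'=\begin{pmatrix}H_{px}&H_{pp}\\ -H_{xx}&-H_{xp}\end{pmatrix}$ at $\bar y$. $\bar\nabla_sH(y_n,y_{n+1})=\tfrac12\big(\bar\nabla H(y_n,y_{n+1})+\bar\nabla H(y_{n+1},y_n)\big)$ is the symmetrized coordinate increment discrete gradient, where $\bar\nabla H$ has components $$\frac{\Delta H}{\Delta y^j}=\frac{H(\hat y^j_n)-H(\hat y^{j-1}_n)}{y^j_{n+1}-y^j_n},\qquad \hat y^j_n=(y^1_{n+1},\dots,y^j_{n+1},y^{j+1}_n,\dots,y^{2m}_n),$$ with the partial derivative as limit when $y^j_{n+1}=y^j_n$. *)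

(* Defs.v *)
From mathcomp Require Import all_boot all_order all_algebra.
From mathcomp Require Import all_classical all_reals all_analysis.
Set Implicit Arguments. Unset Strict Implicit. Unset Printing Implicit Defensive.
Import GRing.Theory Num.Theory.
Local Open Scope ring_scope.

Section Defs.
Variable R : realType.

Definition expmx (n : nat) (X : 'M[R]_n) : 'M[R]_n :=
  limn (series (fun k : nat => (k`!%:R)^-1 *: X ^+ k)).

Definition sinhmx (n : nat) (X : 'M[R]_n) : 'M[R]_n :=
  2^-1 *: (expmx X - expmx (- X)).
Definition coshmx (n : nat) (X : 'M[R]_n) : 'M[R]_n :=
  2^-1 *: (expmx X + expmx (- X)).
(* Matrix tanh = sinh X * (cosh X)^{-1}; meaningful when cosh X is invertible. *)
Definition tanhmx (n : nat) (X : 'M[R]_n) : 'M[R]_n :=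
  sinhmx X *m invmx (coshmx X).

Definition basis_vec (n : nat) (j : 'I_n) : 'cV[R]_n := delta_mx j 0.

Fixpoint dderiv (n : nat) (vs : seq 'cV[R]_n) (f : 'cV[R]_n -> R)
  : 'cV[R]_n -> R :=
  match vs with
  | [::] => f
  | v :: vs' => fun x => 'D_v (dderiv vs' f) x
  end.

Definition smooth (n : nat) (f : 'cV[R]_n -> R) : Prop :=
  forall (vs : seq 'cV[R]_n) x, differentiable (dderiv vs f) x.

Definition hessian (n : nat) (f : 'cV[R]_n -> R) (x : 'cV[R]_n) : 'M[R]_n :=
  \matrix_(i, j) 'D_(basis_vec i) ('D_(basis_vec j) f) x.

Definition Smx (m : nat) : 'M[R]_(m + m) :=
  block_mx 0 1%:M (- 1%:M) 0.

Definition Fprime (m : nat) (H : 'cV[R]_(m + m) -> R) (ybar : 'cV[R]_(m + m))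
  : 'M[R]_(m + m) := Smx m *m hessian H ybar.

Definition theta (m : nat) (H : 'cV[R]_(m + m) -> R) (ybar : 'cV[R]_(m + m))
  (h : R) : 'M[R]_(m + m) :=
  2%:R *: (invmx (Fprime H ybar) *m tanhmx ((h / 2) *: Fprime H ybar)).

(* hat y^j (0-indexed j): coordinates 0..j from y', the others from y.
   hat y^{j-1}: coordinates 0..j-1 from y', the others from y. *)
Definition yhat (n : nat) (y y' : 'cV[R]_n) (j : 'I_n) : 'cV[R]_n :=
  \col_i (if (i <= j)%N then y' i 0 else y i 0).
Definition yhat_prev (n : nat) (y y' : 'cV[R]_n) (j : 'I_n) : 'cV[R]_n :=
  \col_i (if (i < j)%N then y' i 0 else y i 0).

Definition coord_dgrad (n : nat) (f : 'cV[R]_n -> R) (y y' : 'cV[R]_n)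
  : 'cV[R]_n :=
  \col_j (if y' j 0 != y j 0 then
            (f (yhat y y' j) - f (yhat_prev y y' j)) / (y' j 0 - y j 0)
          else 'D_(basis_vec j) f (yhat_prev y y' j)).

Definition sym_dgrad (n : nat) (f : 'cV[R]_n -> R) (y y' : 'cV[R]_n)
  : 'cV[R]_n :=
  2^-1 *: (coord_dgrad f y y' + coord_dgrad f y' y).

End Defs.

(* Main.v *)
Require Import Defs.
From HB Require Import structures.
From mathcomp Require Import all_boot all_order all_algebra.
From mathcomp Require Import all_classical all_reals all_analysis.
From mathcomp Require Import ring lra.
Import Order.TTheory GRing.Theory Num.Theory.
Import numFieldNormedType.Exports.
Local Open Scope ring_scope.


HB.instance Definition _ (R : realType) (m n : nat) := Complete.on 'M[R]_(m,n).

Section MX.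
Local Open Scope classical_set_scope.
Variable R : realType.

Lemma mx_entry_le (a b : nat) (M : 'M[R]_(a,b)) i j : `|M i j| <= `|M|.
Proof.
rewrite [leRHS]/Num.Def.normr/= mx_normrE.
exact: (le_bigmax _ _ (i, j)).
Qed.

Lemma mx_lin_bound (a b c d : nat) (f : {linear 'M[R]_(a,b) -> 'M[R]_(c,d)}) M :
  `|f M| <= (\sum_(i < a) \sum_(j < b) `|f (delta_mx i j)|) * `|M|.
Proof.
rewrite {1}(matrix_sum_delta M) linear_sum/=.
rewrite (le_trans (ler_norm_sum _ _ _))// mulr_suml; apply: ler_sum => i _.
rewrite linear_sum/= (le_trans (ler_norm_sum _ _ _))// mulr_suml.
apply: ler_sum => j _; rewrite linearZ/= normrZ mulrC.
by rewrite ler_wpM2l ?mx_entry_le.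
Qed.

Lemma mx_lin_lim (a b c d : nat) (f : {linear 'M[R]_(a,b) -> 'M[R]_(c,d)})
  (u : nat -> 'M[R]_(a,b)) : cvgn u -> limn (fun k => f (u k)) = f (limn u).
Proof.
move=> cu; apply: cvg_lim => //.
have fc : bounded_near f (nbhs (0 : 'M[R]_(a,b))).
  apply/linear_boundedP.
  set K := (\sum_(i < a) \sum_(j < b) `|f (delta_mx i j)|).
  apply: filterS (nbhs_pinfty_ge (num_real K)) => r Kr x.
  by apply: le_trans (mx_lin_bound _ _ _ _ f x) _; rewrite ler_wpM2r.
have := @bounded_linear_continuous R 'M[R]_(a,b) 'M[R]_(c,d) f fc (limn u).
move=> fcu.
exact: (continuous_cvg _ fcu).
Qed.

Lemma mx_mul_norm (a b c : nat) (A : 'M[R]_(a,b)) (B : 'M[R]_(b,c)) :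
  `|A *m B| <= b%:R * `|A| * `|B|.
Proof.
have mx_norm_le (a' b' : nat) (M : 'M[R]_(a',b')) (e : R) : 0 <= e ->
  (forall i j, `|M i j| <= e) -> `|M| <= e.
  move=> c0 H; rewrite [leLHS]/Num.Def.normr/= mx_normrE.
  by apply: bigmax_le => // -[i j] _; exact: H.
apply: mx_norm_le; first by rewrite mulr_ge0 ?mulr_ge0.
move=> i j; rewrite mxE (le_trans (ler_norm_sum _ _ _))//.
rewrite -mulrA -[_ * `|B|]mulr1 -[b in b%:R]card_ord -sumr_const.
rewrite mulr1 big_distrl/=; apply: ler_sum => k _; rewrite mul1r.
by rewrite normrM ler_pM ?mx_entry_le.
Qed.

Lemma mx_pow_norm (n : nat) (Y : 'M[R]_n) k : `|Y ^+ k| <= (n%:R * `|Y|) ^+ k.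
Proof.
elim: k => [|k IH].
  rewrite !expr0 [leLHS]/Num.Def.normr/= mx_normrE.
  apply: bigmax_le => // -[i j] _; rewrite mxE.
  by case: (_ == _); rewrite ?normr1 ?normr0.
rewrite exprSr; have := @mx_mul_norm n n n (Y ^+ k) Y; rewrite mulmxE => /le_trans; apply.
rewrite exprSr.
by rewrite [_ * `|Y ^+ k|]mulrC -mulrA ler_pM ?mulr_ge0.
Qed.

Lemma expmx_cvg (n : nat) (Y : 'M[R]_n) :
  cvgn (series (fun k : nat => (k`!%:R)^-1 *: Y ^+ k)).
Proof.
apply: (@normed_cvg R 'M[R]_n).
apply: (@series_le_cvg _ _ (exp_coeff (n%:R * `|Y|))).
- by move=> k /=.
- by move=> k; rewrite /exp_coeff divr_ge0 ?exprn_ge0 ?mulr_ge0.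
- move=> k /=; rewrite /exp_coeff normrZ ger0_norm ?invr_ge0// mulrC.
  by rewrite ler_pM ?invr_ge0 ?mx_pow_norm.
- exact: is_cvg_series_exp_coeff.
Qed.

Lemma expmx_lin (n : nat) (f : {linear 'M[R]_n -> 'M[R]_n}) (Y Z : 'M[R]_n) :
  (forall k, f (Y ^+ k) = Z ^+ k) -> f (expmx Y) = expmx Z.
Proof.
move=> fYZ; rewrite /expmx -(mx_lin_lim _ _ _ _ f _ (expmx_cvg _ Y)).
set u := (fun k => f _); set v := series _.
suff -> : u = v by [].
apply/funext => k; rewrite /u /v.
rewrite /series /= linear_sum; apply: eq_bigr => i _.
by rewrite linearZ /= fYZ.
Qed.

Lemma expmx_tr (n : nat) (Y : 'M[R]_n) : (expmx Y)^T = expmx Y^T.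
Proof.
apply: (@expmx_lin n (trmx : {linear 'M[R]_n -> 'M[R]_n})) => k /=.
elim: k => [|k IH]; first by rewrite !expr0 trmx1.
by rewrite exprSr exprS -mulmxE trmx_mul IH mulmxE.
Qed.

Lemma expmx_conj (n : nat) (P Q Y : 'M[R]_n) : P *m Q = 1%:M -> Q *m P = 1%:M ->
  P *m expmx Y *m Q = expmx (P *m Y *m Q).
Proof.
move=> PQ QP.
have -> : P *m expmx Y *m Q = mulmxr Q (mulmx P (expmx Y)) by [].
apply: (@expmx_lin n ((mulmxr Q : {linear 'M[R]_n -> 'M[R]_n}) \o (mulmx P : {linear 'M[R]_n -> 'M[R]_n}))) => k /=.
elim: k => [|k IH]; first by rewrite !expr0 mulmx1 PQ.
rewrite exprS [in RHS]exprS -!mulmxE -IH.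
by rewrite !mulmxA -(mulmxA _ Q P) QP mulmx1.
Qed.

Lemma expmx_comm (n : nat) (G Y : 'M[R]_n) : G *m Y = Y *m G ->
  G *m expmx Y = expmx Y *m G.
Proof.
move=> GY.
rewrite -[expmx Y *m G]/(mulmxr G (expmx Y)) /expmx -(mx_lin_lim _ _ _ _ (mulmx G) _ (expmx_cvg _ Y)).
rewrite -(mx_lin_lim _ _ _ _ (mulmxr G) _ (expmx_cvg _ Y)).
set u := (fun k => _); set v := (fun k => _).
suff -> : u = v by [].
apply/funext => k; rewrite /u /v /= /series /=.
rewrite mulmx_suml mulmx_sumr; apply: eq_bigr => i _.
rewrite -scalemxAr -scalemxAl; congr (_ *: _).
have : GRing.comm G Y by rewrite /GRing.comm -!mulmxE.
by move/(commrX i); rewrite /GRing.comm -!mulmxE.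
Qed.
End MX.


Section Alg.
Variable R : realType.
Variable n : nat.
Implicit Types A B M P Q : 'M[R]_n.

Lemma inv_uniq A B : A *m B = 1%:M -> invmx A = B.
Proof.
move=> AB; have [Au _] := mulmx1_unit AB.
by rewrite -[invmx A]mulmx1 -AB mulmxA mulVmx // mul1mx.
Qed.

Lemma inv_conj P Q A : P *m Q = 1%:M -> Q *m P = 1%:M -> A \in unitmx ->
  invmx (P *m A *m Q) = P *m invmx A *m Q.
Proof.
move=> PQ QP Au; apply: inv_uniq.
rewrite !mulmxA -(mulmxA _ Q P) QP mulmx1 -(mulmxA P A) mulmxV // mulmx1 //.
Qed.

Lemma invN A : A \in unitmx -> invmx (- A) = - invmx A.
Proof. by move=> Au; apply: inv_uniq; rewrite mulNmx mulmxN opprK mulmxV. Qed.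

Lemma comm_inv A B : A \in unitmx -> A *m B = B *m A -> invmx A *m B = B *m invmx A.
Proof.
move=> Au AB.
by rewrite -[invmx A *m B]mulmx1 -(mulmxV Au) !mulmxA -(mulmxA _ B A) -AB
  mulmxA mulVmx // mul1mx.
Qed.

Lemma conjZ P Q (a : R) A : P *m (a *: A) *m Q = a *: (P *m A *m Q).
Proof. by rewrite -scalemxAr -scalemxAl. Qed.
Lemma conjN P Q A : P *m (- A) *m Q = - (P *m A *m Q).
Proof. by rewrite mulmxN mulNmx. Qed.
Lemma conjD P Q A B : P *m (A + B) *m Q = P *m A *m Q + P *m B *m Q.
Proof. by rewrite mulmxDr mulmxDl. Qed.

Lemma key_skew (S A : 'M[R]_n) (c : R) :
  S^T = - S -> S *m S = - 1%:M -> A^T = A ->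
  S *m A \in unitmx -> coshmx (c *: (S *m A)) \in unitmx ->
  let F := S *m A in let X := c *: F in
  let K := 2%:R *: (invmx F *m tanhmx X) *m S in
  K^T = - K.
Proof.
move=> trS SS trA Fu Cu F X K.
set P := - S; set Q := S.
have PQ : P *m Q = 1%:M by rewrite mulNmx SS opprK.
have QP : Q *m P = 1%:M by rewrite mulmxN SS opprK.
have trF : F^T = P *m (- F) *m Q.
  rewrite /F trmx_mul trA trS /P /Q mulNmx mulmxN opprK !mulmxA SS.
  by rewrite (mulNmx (1%:M) A) mul1mx mulNmx mulmxN.
have trX : X^T = P *m (- X) *m Q by rewrite /X linearZ /= trF -conjZ scalerN.
have trNX : (- X)^T = P *m X *m Q by rewrite linearN /= trX conjN opprK.
have E1 : (expmx X)^T = P *m expmx (- X) *m Q by rewrite expmx_tr trX -expmx_conj.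
have E2 : (expmx (- X))^T = P *m expmx X *m Q by rewrite expmx_tr trNX -expmx_conj.
set Sh := sinhmx X; set C := coshmx X.
have trSh : Sh^T = P *m (- Sh) *m Q.
  rewrite /Sh /sinhmx conjN conjZ conjD conjN linearZ /= linearD /= linearN /=.
  rewrite E1 E2; move: (P *m _ *m Q) (P *m _ *m Q) => a b; by rewrite -scalerN opprB.
have trC : C^T = P *m C *m Q.
  by rewrite /C /coshmx conjZ conjD linearZ /= linearD /= E1 E2 addrC.
have trFi : (invmx F)^T = P *m (- invmx F) *m Q.
  have NFu : - F \in unitmx.
    have [] := @mulmx1_unit _ _ (- F) (- invmx F) => //.
    by rewrite mulNmx mulmxN opprK mulmxV.
  by rewrite trmx_inv trF inv_conj // invN.
have trCi : (invmx C)^T = P *m invmx C *m Q.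
  by rewrite trmx_inv trC inv_conj.
have FX : F *m X = X *m F by rewrite /X -scalemxAr scalemxAl.
have XNX : X *m (- X) = (- X) *m X by rewrite mulmxN mulNmx.
have FNX : F *m (- X) = (- X) *m F by rewrite mulmxN mulNmx FX.
have FE := @expmx_comm R n _ _ FX.
have FE' := @expmx_comm R n _ _ FNX.
have XE' := @expmx_comm R n _ _ XNX.
have EE' : expmx (- X) *m expmx X = expmx X *m expmx (- X).
  by rewrite (@expmx_comm R n _ _ (esym XE')).
have FSh : F *m Sh = Sh *m F.
  by rewrite /Sh /sinhmx -scalemxAr -scalemxAl mulmxBr mulmxBl FE FE'.
have FC : F *m C = C *m F.
  by rewrite /C /coshmx -scalemxAr -scalemxAl mulmxDr mulmxDl FE FE'.
have CSh : C *m Sh = Sh *m C.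
  rewrite /C /Sh /coshmx /sinhmx -!scalemxAr -!scalemxAl; congr (_ *: (_ *: _)).
  rewrite mulmxDl !mulmxBr mulmxBl !mulmxDr EE'.
  move: (_ *m expmx X) (expmx X *m _) (expmx (- X) *m _) => a b d.
  by rewrite addrA subrK opprD addrA addrK.
have FiSh := comm_inv _ _ Fu FSh.
have CiSh := comm_inv _ _ Cu CSh.
have FiC := comm_inv _ _ Fu FC.
have CiFi : invmx C *m invmx F = invmx F *m invmx C.
  by rewrite (comm_inv _ _ Cu (esym FiC)).
have T : invmx C *m Sh *m invmx F = invmx F *m (Sh *m invmx C).
  by rewrite -mulmxA -FiSh mulmxA CiFi -mulmxA CiSh.
rewrite /K /tanhmx -/Sh -/C trmx_mul linearZ /= trmx_mul trmx_mul.
rewrite trFi trSh trCi trS.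
rewrite -scalemxAr -scalemxAl.
transitivity (2 *: (- (invmx F *m (Sh *m invmx C) *m S))); last by rewrite scalerN.
congr (_ *: _).
rewrite !mulmxA -!(mulmxA _ Q P) QP !mulmx1 !mulmxN !mulNmx opprK.
rewrite opprK SS (mulNmx (1%:M) (invmx C)) mul1mx !mulNmx T !mulmxA.
by [].
Qed.
End Alg.


Section DG.
Variable R : realType.
Variable n : nat.

Lemma dgrad_id (f : 'cV[R]_n -> R) (y y' : 'cV[R]_n) :
  \sum_(j < n) coord_dgrad f y y' j 0 * (y' j 0 - y j 0) = f y' - f y.
Proof.
pose phi k := f (\col_i (if (i < k)%N then y' i 0 else y i 0)).
have E j : coord_dgrad f y y' j 0 * (y' j 0 - y j 0) = phi j.+1 - phi j.
  have e1 : yhat y y' j = \col_i (if (i < j.+1)%N then y' i 0 else y i 0).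
    by apply/matrixP => i k; rewrite !mxE ltnS.
  have e2 : yhat_prev y y' j = \col_i (if (i < j)%N then y' i 0 else y i 0).
    by [].
  rewrite /coord_dgrad mxE; case: ifPn => [neq|].
    by rewrite e1 e2 divfK // subr_eq0.
  rewrite negbK => /eqP eq; rewrite eq subrr mulr0 /phi.
  suff -> : (\col_i (if (i < j.+1)%N then y' i 0 else y i 0)) =
            (\col_i (if (i < j)%N then y' i 0 else y i 0)) :> 'cV[R]_n by rewrite subrr.
  apply/matrixP => i k; rewrite !mxE ltnS leq_eqVlt.
  case: (eqVneq (val i) (val j)) => [/val_inj ->|//]; rewrite ltnn /=.
  by rewrite eq.
under eq_bigr do rewrite E.
rewrite -(big_mkord xpredT (fun j => phi j.+1 - phi j)) telescope_sumr //.
rewrite /phi; congr (f _ - f _); apply/matrixP => i k; rewrite mxE ?ltn_ord ?ltn0 (ord1 k) //.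
Qed.
End DG.


Section Schwarz.
Local Open Scope classical_set_scope.
Variable R : realType.
Variable V : normedModType R.

Lemma line_is_derive (g : V -> R) (a w : V) (s : R) :
  derivable g (a + s *: w) w ->
  is_derive s 1 (fun t => g (a + t *: w)) ('D_w g (a + s *: w)).
Proof.
move=> dg.
have E : (fun h : R => h^-1 *: (((fun t => g (a + t *: w)) \o shift s) (h *: 1)
            - g (a + s *: w))) =
         (fun h : R => h^-1 *: ((g \o shift (a + s *: w)) (h *: w) - g (a + s *: w))).
  apply/funext => h /=; congr (_ *: (g _ - _)).
  rewrite (_ : h%:A = h); last exact: mulr1.
  by rewrite scalerDl addrCA addrA.
split; rewrite /derivable /derive.
  have -> : (fun h : R => h^-1 *: (((fun t => g (a + t *: w)) \o shift s) (h *: 1)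
            - (fun t => g (a + t *: w)) s)) = _ := E.
  exact: dg.
by rewrite E.
Qed.

Lemma mvt_R (phi dphi : R -> R) (t : R) : 0 < t ->
  (forall s : R, is_derive s (1 : R) phi (dphi s)) ->
  exists2 s, 0 < s < t & phi t - phi 0 = t * dphi s.
Proof.
move=> t0 dphi_ok.
have cont : {within `[0, t], continuous phi}.
  apply: continuous_subspaceT => s.
  apply: differentiable_continuous; apply/derivable1_diffP.
  by have [] := dphi_ok s.
have [s sin E] := @MVT R phi dphi 0 t t0 (fun s _ => dphi_ok s) cont.
exists s; first by move: sin; rewrite in_itv.
by rewrite E subr0 mulrC.
Qed.

Lemma stepA (f : V -> R) (x u v : V) (t : R) : 0 < t ->
  (forall z, derivable f z u) -> (forall z, derivable ('D_u f) z v) ->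
  exists s r, [/\ 0 < s < t, 0 < r < t &
    f (x + t *: v + t *: u) - f (x + t *: u) - f (x + t *: v) + f x =
    t * t * 'D_v ('D_u f) (x + s *: u + r *: v)].
Proof.
move=> t0 df ddf.
pose phi (s : R) := f ((x + t *: v) + s *: u) - f (x + s *: u).
pose dphi (s : R) := 'D_u f ((x + t *: v) + s *: u) - 'D_u f (x + s *: u).
have phid : forall s : R, is_derive s (1 : R) phi (dphi s).
  move=> s; apply: is_deriveB; exact: line_is_derive.
have [s sin Es] := @mvt_R _ _ t t0 phid.
pose psi (r : R) := 'D_u f ((x + s *: u) + r *: v).
pose dpsi (r : R) := 'D_v ('D_u f) ((x + s *: u) + r *: v).
have psid : forall r : R, is_derive r (1 : R) psi (dpsi r).
  by move=> r; apply: line_is_derive.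
have [r rin Er] := @mvt_R _ _ t t0 psid.
exists s, r; split => //.
have -> : f (x + t *: v + t *: u) - f (x + t *: u) - f (x + t *: v) + f x =
          phi t - phi 0.
  by rewrite /phi !scale0r !addr0 opprD opprK addrA.
rewrite Es -mulrA; congr (_ * _).
have -> : dphi s = psi t - psi 0.
  by rewrite /dphi /psi scale0r addr0 addrAC.
by rewrite Er.
Qed.

Lemma pt_close (x u v : V) (s r t : R) : 0 < s < t -> 0 < r < t ->
  `|x - (x + s *: u + r *: v)| < t * (`|u| + `|v| + 1).
Proof.
move=> /andP[s0 st] /andP[r0 rt].
rewrite -addrA opprD addrA subrr add0r normrN.
apply: (le_lt_trans (ler_normD _ _)).
rewrite !normrZ !gtr0_norm // mulrDr mulrDr mulr1 -addrA ler_ltD //.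
  by rewrite ler_wpM2r // ltW.
apply: (le_lt_trans (_ : _ <= t * `|v|)); first by rewrite ler_wpM2r // ltW.
by rewrite ltrDl (lt_trans s0 st).
Qed.

Lemma schwarz (f : V -> R) (x u v : V) :
  (forall z, derivable f z u) -> (forall z, derivable f z v) ->
  (forall z, derivable ('D_u f) z v) -> (forall z, derivable ('D_v f) z u) ->
  {for x, continuous ('D_v ('D_u f))} -> {for x, continuous ('D_u ('D_v f))} ->
  'D_v ('D_u f) x = 'D_u ('D_v f) x.
Proof.
move=> dfu dfv dduv ddvu c1 c2.
set a := 'D_v ('D_u f) x; set b := 'D_u ('D_v f) x.
apply/eqP; apply/negPn/negP => neq.
have e0 : 0 < `|a - b| / 2 by rewrite divr_gt0 // normr_gt0 subr_eq0.
set e := `|a - b| / 2 in e0.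
have N1 : \forall z \near x, `|a - 'D_v ('D_u f) z| < e.
  exact: (cvgr_dist_lt _ _ c1).
have N2 : \forall z \near x, `|b - 'D_u ('D_v f) z| < e.
  exact: (cvgr_dist_lt _ _ c2).
have [d /= d0 Hd] := (nbhs_normP _ _).1 (filterI N1 N2).
set K := `|u| + `|v| + 1.
have K0 : 0 < K by rewrite ltr_wpDl // addr_ge0.
pose t := d / K.
have t0 : 0 < t by rewrite divr_gt0.
have tK : t * K = d by rewrite /t divfK // gt_eqF.
have [s1 [r1 [s1t r1t E1]]] := stepA f x u v t t0 dfu dduv.
have [s2 [r2 [s2t r2t E2]]] := stepA f x v u t t0 dfv ddvu.
have E : 'D_v ('D_u f) (x + s1 *: u + r1 *: v) = 'D_u ('D_v f) (x + s2 *: v + r2 *: u).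
  apply: (mulfI (_ : t * t != 0)); first by rewrite mulf_neq0 // gt_eqF.
  rewrite -E1 -E2 (addrAC x (t *: u) (t *: v)); congr (_ + _).
  exact: addrAC.
have := pt_close x u v s1 r1 t s1t r1t; rewrite -/K tK => /Hd [H1 _].
have := pt_close x v u s2 r2 t s2t r2t; rewrite (addrC `|v| `|u|) -/K tK => /Hd [_ H2].
have : `|a - b| < e + e.
  have -> : a - b = (a - 'D_v ('D_u f) (x + s1 *: u + r1 *: v)) +
                    ('D_u ('D_v f) (x + s2 *: v + r2 *: u) - b).
    by rewrite -E addrA subrK.
  apply: (le_lt_trans (ler_normD _ _)); apply: ltrD; first exact: H1.
  by rewrite distrC.
by rewrite /e -splitr ltxx.
Qed.
End Schwarz.


Section Final.
Variable R : realType.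

Lemma quad_skew n (K : 'M[R]_n) (g : 'cV[R]_n) : K^T = - K ->
  \sum_(j < n) g j 0 * (K *m g) j 0 = 0.
Proof.
move=> skew.
have E : (g^T *m (K *m g)) 0 0 = \sum_(j < n) g j 0 * (K *m g) j 0.
  by rewrite mxE; apply: eq_bigr => j _; rewrite mxE.
rewrite -E.
set M := g^T *m (K *m g).
have MT : M^T = - M.
  by rewrite /M !trmx_mul trmxK skew mulmxN mulNmx mulmxA.
have : M 0 0 = - M 0 0.
  by rewrite -[in LHS](trmxK M) MT mxE mxE mxE.
move=> h; lra.
Qed.

Lemma trS m : (Smx R m)^T = - Smx R m.
Proof.
rewrite /Smx tr_block_mx !trmx0 trmx1 opp_block_mx !oppr0 opprK.
by rewrite (_ : (- 1%:M)^T = - 1%:M) // linearN /= trmx1.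
Qed.

Lemma SS m : Smx R m *m Smx R m = - 1%:M.
Proof.
rewrite /Smx mulmx_block !mul0mx !mulmx0 !addr0 !add0r mul1mx mulmx1.
by rewrite (scalar_mx_block m m 1) opp_block_mx oppr0.
Qed.

Lemma hess_sym m (H : 'cV[R]_(m + m) -> R) x : smooth H ->
  (hessian H x)^T = hessian H x.
Proof.
move=> sm; apply/matrixP => i j; rewrite !mxE.
set u := basis_vec R i; set v := basis_vec R j.
apply: schwarz.
- by move=> z; apply: diff_derivable; exact: (sm [::] z).
- by move=> z; apply: diff_derivable; exact: (sm [::] z).
- by move=> z; apply: diff_derivable; exact: (sm [:: u] z).
- by move=> z; apply: diff_derivable; exact: (sm [:: v] z).
- exact: differentiable_continuous (sm [:: v; u] x).
- exact: differentiable_continuous (sm [:: u; v] x).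
Qed.
End Final.

Theorem proposition6p9 (R : realType) (m : nat)
  (H : 'cV[R]_(m + m) -> R) (ybar : 'cV[R]_(m + m)) (h : R)
  (yn yn1 : 'cV[R]_(m + m)) :
  smooth H ->
  Fprime H ybar \in unitmx ->
  coshmx ((h / 2) *: Fprime H ybar) \in unitmx ->
  yn1 - yn = theta H ybar h *m @Smx R m *m sym_dgrad H yn yn1 ->
  H yn1 = H yn.
Proof.
move=> sm Fu Cu eq.
have skew := @key_skew R (m + m) (Smx R m) (hessian H ybar) (h / 2)
  (@trS R m) (@SS R m) (@hess_sym R m H ybar sm) Fu Cu.
simpl in skew.
set g := sym_dgrad H yn yn1 in eq *.
have Hd : H yn1 - H yn = \sum_(j < m + m) g j 0 * (yn1 - yn) j 0.
  have e1 := @dgrad_id R _ H yn yn1.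
  have e2 := @dgrad_id R _ H yn1 yn.
  rewrite (eq_bigr (fun j => 2^-1 * (coord_dgrad H yn yn1 j 0 * (yn1 j 0 - yn j 0))
     - 2^-1 * (coord_dgrad H yn1 yn j 0 * (yn j 0 - yn1 j 0)))); last first.
    by move=> j _; rewrite /g /sym_dgrad !mxE; ring.
  rewrite sumrB -!mulr_sumr e1 e2; lra.
apply/eqP; rewrite -subr_eq0; apply/eqP.
rewrite Hd eq.
exact: quad_skew.
Qed.
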